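(* If $G$ is a finite directed acyclic graph with at least one edge, then \[\tilde{\chi}(\mathrm{DT}(G))=-\prod_{v\in V(G)\setminus R}(1-d^-(v)),\] where $R$ is the set of vertices of $G$ without edges directed to them.
   Context: A directed acyclic graph has no directed cycles. A directed forest is a set of edges which, as a graph, is acyclic with at most one edge directed to each vertex. $\mathrm{DT}(G)$ is the simplicial complex with vertex set $E(G)$ whose simplices are the directed forests. $d^-(v)$ denotes the number of edges of $G$ directed to $v$, and $\tilde\chi$ is the reduced Euler characteristic. *)

(* Defs.v *)
From mathcomp Require Import all_boot all_order all_algebra.
From mathcomp Require Import boolp.
Set Implicit Arguments. Unset Strict Implicit. Unset Printing Implicit Defensive.
Import GRing.Theory Num.Theory.

Section DiGraph.
Variables (V E : finType) (src tgt : E -> V).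

Definition closed_walk (s : seq E) : bool :=
  match s with
  | [::] => false
  | e :: s' => path (fun a b => tgt a == src b) e s' && (tgt (last e s') == src e)
  end.

Definition acyclic_on (F : {set E}) : Prop :=
  forall s : seq E, all (fun e => e \in F) s -> ~~ closed_walk s.

Definition acyclic : Prop := acyclic_on [set: E].

Definition indeg (v : V) : nat := #|[set e : E | tgt e == v]|.

Definition directed_forest (F : {set E}) : Prop :=
  acyclic_on F /\ forall v : V, #|[set e in F | tgt e == v]| <= 1.

End DiGraph.

(* Reduced Euler characteristic of a simplicial complex on vertex set E,
   given by its set of faces (including the empty face):
   sum over faces s of (-1)^(dim s) = (-1)^(|s|-1). *)
Definition reduced_euler (E : finType) (faces : {set E} -> Prop) : int :=
  (- \sum_(F : {set E} | `[< faces F >]) (-1) ^+ #|F|)%R.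

(* Main.v *)
Require Import Defs.
From mathcomp Require Import all_boot all_order all_algebra.
From mathcomp Require Import boolp.
Import GRing.Theory Num.Theory.
Local Open Scope ring_scope.
Set Implicit Arguments. Unset Strict Implicit.

Section Aux.
Variables (V E : finType) (src tgt : E -> V).

Definition Qv (v : V) (o : option E) : bool :=
  if o is Some e then tgt e == v else true.
Definition wo (o : option E) : int := if o is Some _ then -1 else 1.

Lemma per_vertex v : \sum_(o | Qv v o) wo o = 1 - (indeg tgt v)%:Z.
Proof.
rewrite (bigD1 None) //=.
rewrite (reindex_omap Some id (P := fun o => Qv v o && (o != None))); last first.
  by move=> [e|] //=.
rewrite /= (eq_bigl (fun e => tgt e == v)); last by move=> e /=; rewrite eqxx !andbT.
rewrite sumr_const /indeg.
have -> : #|[set e : E | tgt e == v]| = #|(fun e => tgt e == v)|.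
  by apply: eq_card => e; rewrite inE.
by rewrite mulNrn -[1 *+ _]/(_%:R) natz.
Qed.

Definition hF (f : {ffun V -> option E}) : {set E} :=
  [set e | f (tgt e) == Some e].
Definition hF' (F : {set E}) : {ffun V -> option E} :=
  [ffun v => [pick e in F | tgt e == v]].

Definition cnt1 (F : {set E}) : bool :=
  [forall v, #|[set e in F | tgt e == v]| <= 1]%N.

Lemma cnt1_uniq F v e e' : cnt1 F -> e \in F -> e' \in F -> tgt e = v -> tgt e' = v -> e = e'.
Proof.
move=> /forallP /(_ v) H eF e'F te te'.
apply/eqP; apply: contraLR H => ne; rewrite -ltnNge.
apply/card_gt1P; exists e, e'.
by rewrite !inE eF e'F te te' eqxx ne.
Qed.

Lemma hFK F : cnt1 F -> hF (hF' F) = F.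
Proof.
move=> HF; apply/setP => e; rewrite inE ffunE.
case: pickP => [e' /andP[e'F te']|H].
  apply/eqP/idP => [[<-] //|eF]; congr Some.
  exact: (cnt1_uniq HF e'F eF (eqP te') erefl).
by move: (H e); rewrite eqxx andbT => ->.
Qed.

Lemma family_iff f : (f \in family (Qv)) = cnt1 (hF f) && (hF' (hF f) == f).
Proof.
apply/idP/idP.
  move/familyP => Hf.
  have c1 : cnt1 (hF f).
    apply/forallP => v; rewrite leqNgt; apply/negP => /card_gt1P [x [y [x1 y1 xy]]].
    move: x1 y1; rewrite /hF !inE => /andP[/eqP fx /eqP tx] /andP[/eqP fy /eqP ty].
    by move: fx fy xy; rewrite tx ty => -> [->]; rewrite eqxx.
  rewrite c1 /=; apply/eqP/ffunP => v; rewrite ffunE.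
  case: pickP => [e /andP[]|H]; first by rewrite /hF inE => /eqP <- /eqP ->.
  move: (Hf v); rewrite unfold_in /Qv; case E1: (f v) => [e|] //= /eqP te.
  by move: (H e); rewrite /hF inE te E1 !eqxx.
move=> /andP[_ /eqP <-]; apply/familyP => v; rewrite /Qv ffunE.
by case: pickP => [e /andP[]|] .
Qed.

Lemma card_hF f : f \in family Qv -> #|hF f| = #|[set v | f v != None]|.
Proof.
move=> /familyP Hf.
rewrite -(card_in_imset (f := tgt)); last first.
  move=> x y; rewrite /hF !inE => /eqP fx /eqP fy txy.
  by move: fx; rewrite txy fy => -[].
apply: eq_card => v; rewrite [RHS]inE; apply/imsetP/idP.
  by move=> [e]; rewrite /hF inE => /eqP fe ->; rewrite fe.
move: (Hf v); rewrite unfold_in /Qv; case E1 : (f v) => [e|] //= /eqP te _.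
by exists e => //; rewrite /hF inE te E1.
Qed.

Lemma prod_wo (f : V -> option E) : \prod_v wo (f v) = (-1) ^+ #|[set v | f v != None]|.
Proof.
rewrite (bigID (fun v => f v != None)) /=.
rewrite [X in _ * X]big1; last by move=> v; rewrite negbK => /eqP ->.
rewrite mulr1 (eq_bigr (fun _ => -1)); last by move=> v; case: (f v).
by rewrite prodr_const; congr (_ ^+ _); apply: eq_card => v; rewrite inE.
Qed.

End Aux.

Theorem lemma2p11 (V E : finType) (src tgt : E -> V) :
  acyclic src tgt -> (0 < #|E|)%N ->
  reduced_euler (directed_forest src tgt) =
  - \prod_(v : V | indeg tgt v != 0%N) (1 - (indeg tgt v)%:Z).
Proof.
move=> Hac _; rewrite /reduced_euler; congr (- _).
rewrite (eq_bigl (cnt1 tgt)); last first.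
  move=> F; apply/asboolP/idP.
    by move=> [_ H]; apply/forallP => v; exact: H.
  move=> H; split; last by move=> v; exact: (forallP H v).
  by move=> s _; apply: Hac; apply/allP => e _; rewrite inE.
rewrite (reindex_onto (hF tgt) (hF' tgt)); last exact: hFK.
have -> : \prod_(v : V | indeg tgt v != 0%N) (1 - (indeg tgt v)%:Z) =
          \prod_(v : V) (1 - (indeg tgt v)%:Z).
  rewrite [RHS](bigID (fun v => indeg tgt v != 0%N)) /=.
  by rewrite [X in _ = _ * X]big1 ?mulr1 // => v; rewrite negbK => /eqP ->; rewrite subr0.
rewrite [RHS](eq_bigr _ (fun v _ => esym (per_vertex tgt v))).
rewrite bigA_distr_big_dep.
apply: eq_big => [f|f Hf]; first by rewrite family_iff.
by rewrite prod_wo card_hF // family_iff.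
Qed.
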